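(* The mechanism \textsc{Greedy Min-Sum} is strategyproof: for every instance $(N,P,T,(\mathbf{D}_i)_{i\in N})$, every agent $i\in N$ and every disapproval vector $\mathbf{D}'_i$, we have $d_i(\mathcal{M}(\mathcal{D}_{-i},\mathbf{D}_i))\le d_i(\mathcal{M}(\mathcal{D}_{-i},\mathbf{D}'_i))$, where $\mathcal{M}$ is \textsc{Greedy Min-Sum} and $d_i$ is computed with respect to the true disapproval vector $\mathbf{D}_i$.
   Context: An instance is $(N,P,T,(\mathbf{D}_i)_{i\in N})$ with agents $N=[n]$, projects $P=\{p_1,\dots,p_m\}$, timesteps $T=[\ell]$, and disapproval vectors $\mathbf{D}_i=(D_{i1},\dots,D_{i\ell})$ with $D_{ik}\subseteq P$. An outcome is $\mathbf{o}=(o_1,\dots,o_\ell)\in P^\ell$ and $d_i(\mathbf{o})=|\{k\in T:o_k\in D_{ik}\}|$. A mechanism maps each instance to an outcome. $\mathcal{D}_{-i}$ denotes the list of disapproval vectors of all agents other than $i$. \textsc{Greedy Min-Sum} selects, at each timestep $k$, a project with the smallest number of agents disapproving it at timestep $k$ (i.e., minimizing $|\{j\in N:p\in D_{jk}\}|$), breaking ties lexicographically according to the fixed order $p_1,\dots,p_m$. *)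

(* Defs.v *)
From mathcomp Require Import all_boot.
Set Implicit Arguments. Unset Strict Implicit. Unset Printing Implicit Defensive.

(* Agents N = 'I_n, projects P = 'I_m (p_1,...,p_m ordered by index),
   timesteps T = 'I_l.  m is written m.+1 in the statement so that P is
   nonempty (outcomes exist). *)

Definition dvec (m l : nat) := {ffun 'I_l -> {set 'I_m}}.

Definition profile (n m l : nat) := {ffun 'I_n -> dvec m l}.

Definition outcome (m l : nat) := {ffun 'I_l -> 'I_m}.

Definition disutil (m l : nat) (D : dvec m l) (o : outcome m l) : nat :=
  #|[set k : 'I_l | o k \in D k]|.

Definition nb_disapp (n m l : nat) (prof : profile n m l) (k : 'I_l) (p : 'I_m) : nat :=
  #|[set j : 'I_n | p \in prof j k]|.

Definition min_score (n m l : nat) (prof : profile n m.+1 l) (k : 'I_l) : nat :=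
  \big[minn/n]_(p : 'I_m.+1) nb_disapp prof k p.

Definition greedy_choice (n m l : nat) (prof : profile n m.+1 l) (k : 'I_l) : 'I_m.+1 :=
  odflt ord0 [pick p : 'I_m.+1 | (nb_disapp prof k p == min_score prof k)
                                  && [forall q : 'I_m.+1, (q < p) ==> (nb_disapp prof k q != min_score prof k)]].

Definition greedy_min_sum (n m l : nat) (prof : profile n m.+1 l) : outcome m.+1 l :=
  [ffun k => greedy_choice prof k].

Definition replace (n m l : nat) (prof : profile n m l) (i : 'I_n) (D' : dvec m l) : profile n m l :=
  [ffun j => if j == i then D' else prof j].

(* Main.v *)
Require Import Defs.
From mathcomp Require Import all_boot.
From mathcomp Require Import zify.

Lemma ms_le n m l (prof : profile n m.+1 l) k p : min_score prof k <= nb_disapp prof k p.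
Proof.
have H : forall (s : seq 'I_m.+1) x, x \in s ->
  \big[minn/n]_(q <- s) nb_disapp prof k q <= nb_disapp prof k x.
  elim=> [|a s IH] x //; rewrite inE big_cons => /orP [/eqP ->|xs].
    exact: geq_minl.
  exact: leq_trans (geq_minr _ _) (IH _ xs).
exact: (H (index_enum _) p (mem_index_enum p)).
Qed.

Lemma ms_ex n m l (prof : profile n m.+1 l) k : exists p, nb_disapp prof k p = min_score prof k.
Proof.
case: (@arg_minnP _ ord0 predT (nb_disapp prof k) erefl) => p0 _ Hp0.
exists p0; apply/eqP; rewrite eqn_leq ms_le andbT /min_score.
apply: (big_ind (fun x => nb_disapp prof k p0 <= x)).
- by rewrite /nb_disapp; apply: leq_trans (max_card _) _; rewrite card_ord.
- by move=> x y Hx Hy; rewrite leq_min Hx Hy.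
- by move=> q _; apply: Hp0.
Qed.

Lemma gc_spec n m l (prof : profile n m.+1 l) k :
  (forall q, nb_disapp prof k (greedy_choice prof k) <= nb_disapp prof k q) /\
  (forall q : 'I_m.+1, q < greedy_choice prof k -> nb_disapp prof k (greedy_choice prof k) < nb_disapp prof k q).
Proof.
rewrite /greedy_choice; case: pickP => [p /andP [/eqP Hp /forallP Hq]|Hn] /=.
  split=> q; rewrite Hp ?ms_le // => Hlt.
  by rewrite ltn_neqAle ms_le andbT eq_sym (implyP (Hq q) Hlt).
exfalso.
case: (@ms_ex n m l prof k) => p0 Hp0.
have P0 : nb_disapp prof k p0 == min_score prof k by apply/eqP.
case: (@arg_minnP _ p0 (fun p : 'I_m.+1 => nb_disapp prof k p == min_score prof k) (fun p : 'I_m.+1 => nat_of_ord p) P0) => c /eqP Hc Hmin.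
move: (Hn c); rewrite Hc eqxx /=; move/negbT/negP; apply.
apply/forallP => q; apply/implyP => Hqc; apply/negP => /eqP Hq.
by have := Hmin q (introT eqP Hq); rewrite leqNgt Hqc.
Qed.

Lemma nb_split n m l (prof prof2 : profile n m l) i k q :
  (forall j, j != i -> prof2 j = prof j) ->
  nb_disapp prof2 k q = #|[set j | (j != i) && (q \in prof j k)]| + (q \in prof2 i k).
Proof.
move=> H; rewrite /nb_disapp (cardD1 i) inE addnC; congr (_ + _).
apply: eq_card => j; rewrite !inE; case: eqP => //= /eqP ji.
by rewrite H.
Qed.

Theorem theorem9 (n m l : nat) (prof : profile n m.+1 l) (i : 'I_n) (D' : dvec m.+1 l) :
  disutil (prof i) (greedy_min_sum prof) <=
  disutil (prof i) (greedy_min_sum (replace prof i D')).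
Proof.
apply: subset_leq_card; apply/subsetP => k; rewrite !inE !ffunE.
set p := greedy_choice prof k; set p' := greedy_choice _ k => Hp.
apply/negPn/negP => Hp'.
have E1 := fun q => @nb_split _ _ _ prof prof i k q (fun _ _ => erefl).
have HR : forall j, j != i -> replace prof i D' j = prof j.
  by move=> j hj; rewrite ffunE (negbTE hj).
have E2 := fun q => @nb_split _ _ _ prof (replace prof i D') i k q HR.
rewrite ffunE eqxx in E2.
have [S1 S2] := @gc_spec n m l prof k.
have [T1 T2] := @gc_spec n m l (replace prof i D') k.
set o := fun q => #|[set j | (j != i) && (q \in prof j k)]| in E1 E2.
have A1 := S1 p'. rewrite !E1 -/p (negbTE Hp') Hp /= in A1.
have B1 := T1 p. rewrite !E2 -/p' in B1.
have hb : forall b : bool, b <= 1 by case.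
have Hpp' : p != p' by apply/eqP => e; move: Hp'; rewrite -e Hp.
case: (ltngtP p p') => [lt|gt|eq]; last by move/val_inj: eq => e; move: Hpp'; rewrite e eqxx.
- have := T2 p lt; rewrite !E2 -/p'.
  move: A1; case: (p \in D' k); case: (p' \in D' k) => /=; lia.
- have := S2 p' gt; rewrite !E1 -/p (negbTE Hp') Hp /=.
  move: B1; case: (p \in D' k); case: (p' \in D' k) => /=; lia.
Qed.
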